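(* Let $n\ge 1$ and $0\leq k\leq \lfloor (n-1)/2\rfloor$. Let $H_k$ be the graph with vertex set $\{u_1,\dots,u_n,v_1,\dots,v_n\}$ whose edges are: $u_iv_i$ for all $1\le i\le n$; for each $1\le t\le k$, the edges $u_{2t-1}u_{2t}$ and $v_{2t-1}v_{2t}$; and for every other pair $i<j$ (i.e. $\{i,j\}\neq\{2t-1,2t\}$ for all $t\le k$), the edges $u_iv_j$ and $v_iu_j$. Then $f(H_k)=n-k-1$. In particular, for $k=\lfloor (n-1)/2\rfloor$, $f(H_k)=\lfloor n/2\rfloor$, while $F(H_k)=n-1$.
   Context: All graphs are finite and simple. For a perfect matching $M$ of $G$, a forcing set of $M$ is a subset $S\subseteq M$ contained in no other perfect matching of $G$; $f(G,M)$ is the minimum size of a forcing set of $M$. $f(G)$ and $F(G)$ are the minimum and maximum of $f(G,M)$ over all perfect matchings $M$ of $G$. *)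

(* Defs.v *)
From mathcomp Require Import all_boot all_order.
Set Implicit Arguments. Unset Strict Implicit. Unset Printing Implicit Defensive.

Section Matchings.
Variables (T : finType) (e : rel T).

Definition is_edge (x : {set T}) : bool :=
  [exists u, exists v, e u v && (x == [set u; v])].

Definition perfect_matching (M : {set {set T}}) : bool :=
  (M \subset [set x | is_edge x]) &&
  [forall v, #|[set x in M | v \in x]| == 1].

Definition forcing (M S : {set {set T}}) : bool :=
  (S \subset M) &&
  [forall M' : {set {set T}}, (perfect_matching M' && (S \subset M')) ==> (M' == M)].

(* f(G,M): minimum size of a forcing set of M (M itself is forcing) *)
Definition fGM (M : {set {set T}}) : nat :=
  \big[minn/#|M|]_(S : {set {set T}} | forcing M S) #|S|.

Definition f_min : nat :=
  \big[minn/#|T|]_(M : {set {set T}} | perfect_matching M) fGM M.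

Definition F_max : nat :=
  \max_(M : {set {set T}} | perfect_matching M) fGM M.

End Matchings.

(* The graph H_k on vertices (false,i) = u_{i+1}, (true,i) = v_{i+1}, i : 'I_n
   (0-indexed). The special pairs {2t-1,2t}, 1<=t<=k (1-indexed) become
   {2s,2s+1}, s<k (0-indexed). *)
Definition special_pair (k : nat) (i j : nat) : bool :=
  [&& i != j, i./2 == j./2 & i./2 < k].

Definition Hk_adj (n k : nat) : rel (bool * 'I_n) :=
  fun x y =>
    if x.1 == y.1 then special_pair k x.2 y.2
    else (x.2 == y.2) || ~~ special_pair k x.2 y.2.
Arguments Hk_adj n k : clear implicits.

(* Main.v *)
Require Import Defs.
From mathcomp Require Import all_boot all_order.
From mathcomp Require Import zify.
Set Implicit Arguments. Unset Strict Implicit. Unset Printing Implicit Defensive.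

Lemma bigmin_le (I : finType) (P : pred I) F x j : P j -> \big[minn/x]_(i | P i) F i <= F j.
Proof.
move=> Pj; have : j \in index_enum I by rewrite mem_index_enum.
elim: (index_enum I) => [|a r IH] //; rewrite inE big_cons => /orP [/eqP <-|/IH H].
  by rewrite Pj geq_minl.
by case: (P a) => //; rewrite geq_min H orbT.
Qed.

Ltac clash := match goal with H : is_true (?a != ?a) |- _ => by rewrite eqxx in H end.

Lemma card_ge2 (T : finType) (A : {set T}) : 1 < #|A| -> exists x y, [/\ x \in A, y \in A & x != y].
Proof. by move/card_gt1P. Qed.

Lemma card_ge3 (T : finType) (A : {set T}) : 2 < #|A| ->
  exists x y z, [/\ x \in A, y \in A, z \in A & [/\ x != y, x != z & y != z]].
Proof.
move=> h; have [x xA] : exists x, x \in A by apply/card_gt0P; apply: leq_ltn_trans h.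
have : 1 < #|A :\ x| by move: h; rewrite (cardsD1 x A) xA.
case/card_gt1P => y [z []]; rewrite !inE => /andP [yx yA] /andP [zx zA] yz.
by exists x, y, z; split => //; split => //; rewrite eq_sym.
Qed.

Lemma card_ge4 (T : finType) (A : {set T}) : 3 < #|A| ->
  exists x y z w, [/\ x \in A, y \in A, z \in A & w \in A] /\
    [/\ x != y, x != z & x != w] /\ [/\ y != z, y != w & z != w].
Proof.
move=> h; have [x xA] : exists x, x \in A by apply/card_gt0P; apply: leq_ltn_trans h.
have : 2 < #|A :\ x| by move: h; rewrite (cardsD1 x A) xA.
case/card_ge3 => y [z [w []]]; rewrite !inE => /andP [yx yA] /andP [zx zA] /andP [wx wA] [yz yw zw].
by exists x, y, z, w; split; [split|split; split] => //; rewrite eq_sym.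
Qed.

Section Gen.
Variables (T : finType) (e : rel T).
Hypothesis eirr : irreflexive e.

Lemma edgeP x : is_edge e x -> exists u v, [/\ e u v, u != v & x = [set u; v]].
Proof.
move/existsP=> [u /existsP [v /andP [huv /eqP ->]]]; exists u, v; split => //.
by apply/eqP => Euv; subst; rewrite eirr in huv.
Qed.

Lemma edgeI u v : e u v -> is_edge e [set u; v].
Proof. by move=> h; apply/existsP; exists u; apply/existsP; exists v; rewrite h eqxx. Qed.

Lemma pm_edge M x : perfect_matching e M -> x \in M -> is_edge e x.
Proof. by case/andP => /subsetP H _ /H; rewrite inE. Qed.

Lemma pm_cover M v : perfect_matching e M -> exists2 x, x \in M & v \in x.
Proof.
case/andP => _ /forallP /(_ v) /cards1P [x Hx].
have : x \in [set x in M | v \in x] by rewrite Hx set11.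
by rewrite inE => /andP [] ; exists x.
Qed.

Lemma pm_uniq M v x y : perfect_matching e M -> x \in M -> y \in M ->
  v \in x -> v \in y -> x = y.
Proof.
case/andP => _ /forallP /(_ v) /cards1P [z Hz] xM yM vx vy.
have : x \in [set x in M | v \in x] by rewrite inE xM vx.
have : y \in [set x in M | v \in x] by rewrite inE yM vy.
by rewrite Hz !inE => /eqP -> /eqP ->.
Qed.

Lemma pm_intro (M : {set {set T}}) : (forall x, x \in M -> is_edge e x) ->
  (forall v, exists2 x, x \in M & v \in x) ->
  (forall v x y, x \in M -> y \in M -> v \in x -> v \in y -> x = y) ->
  perfect_matching e M.
Proof.
move=> He Hc Hu; apply/andP; split.
  by apply/subsetP => x xM; rewrite inE He.
apply/forallP => v; apply/cards1P; have [x xM vx] := Hc v; exists x.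
apply/setP => y; rewrite !inE; apply/andP/eqP => [[yM vy]|->] //.
exact: Hu vy vx.
Qed.

Lemma edge_card x : is_edge e x -> #|x| = 2.
Proof. by case/edgeP => u [v [_ uv ->]]; rewrite cards2 uv. Qed.

Lemma pm_card M : perfect_matching e M -> #|M| * 2 = #|T|.
Proof.
move=> pM.
have H1 : forall v, #|[set x in M | v \in x]| = 1.
  by move=> v; case/andP: pM => _ /forallP /(_ v) /eqP.
transitivity (\sum_(x in M) \sum_(v : T) (v \in x : nat)).
  rewrite -sum_nat_const; apply: eq_bigr => x xM.
  by rewrite -(edge_card (pm_edge pM xM)) -sum1_card big_mkcond.
rewrite exchange_big /= -(sum1_card T); apply: eq_bigr => v _.
rewrite -(H1 v) -sum1_card [RHS]big_mkcond [LHS]big_mkcond /=; apply: eq_bigr => x _.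
by rewrite inE; case: (x \in M); case: (v \in x).
Qed.

Lemma pm_sub_eq M M' : perfect_matching e M -> perfect_matching e M' ->
  M \subset M' -> M' = M.
Proof.
move=> pM pM' sub; apply/setP => x; apply/idP/idP; last by move/(subsetP sub).
move=> xM'; have [u [v [_ _ xe]]] := edgeP (pm_edge pM' xM').
have [y yM uy] := pm_cover u pM.
have -> : x = y by apply: (pm_uniq pM' xM' (subsetP sub _ yM) _ uy); rewrite xe set21.
done.
Qed.

Lemma edge_ne M x y : perfect_matching e M -> [set x; y] \in M -> x != y.
Proof.
move=> pM /(pm_edge pM) /edgeP [u [v [_ uv E]]].
apply/eqP => exy; subst y; have := congr1 (fun s : {set T} => #|s|) E.
by rewrite setUid cards1 cards2 uv.
Qed.

Lemma swap_pm M x y z w : perfect_matching e M -> [set x; y] \in M -> [set z; w] \in M ->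
  [set x; y] != [set z; w] -> e x z -> e y w ->
  exists M', [/\ perfect_matching e M', M' != M &
     forall t, t \in M -> t != [set x; y] -> t != [set z; w] -> t \in M'].
Proof.
move=> pM xyM zwM ne exz eyw.
have nxy := edge_ne pM xyM.
have nzw := edge_ne pM zwM.
have dis : forall a, a \in [set x; y] -> a \in [set z; w] -> False.
  by move=> a ha hb; move/eqP: ne; apply; exact: pm_uniq pM xyM zwM ha hb.
have nzx : z \notin [set x; y] by apply/negP => /dis; rewrite set21; apply.
have nwx : w \notin [set x; y] by apply/negP => /dis; rewrite set22; apply.
move: nzx nwx; rewrite !inE => /norP [nzx nzy] /norP [nwx nwy].
pose M' := (M :\ [set x; y] :\ [set z; w]) :|: [set [set x; z]; [set y; w]].
exists M'; split.
- apply: pm_intro.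
  + move=> t; rewrite !inE => /orP [/andP [_ /andP [_ tM]]|/orP [] /eqP ->].
    * exact: pm_edge pM tM.
    * exact: edgeI.
    * exact: edgeI.
  + move=> v.
    have [t tM vt] := pm_cover v pM.
    case: (eqVneq t [set x; y]) => [Et|nt1].
      subst t; move: vt; rewrite !inE => /orP [] /eqP ->.
        by exists [set x; z]; rewrite !inE ?eqxx ?orbT.
      by exists [set y; w]; rewrite !inE ?eqxx ?orbT.
    case: (eqVneq t [set z; w]) => [Et|nt2].
      subst t; move: vt; rewrite !inE => /orP [] /eqP ->.
        by exists [set x; z]; rewrite !inE ?eqxx ?orbT.
      by exists [set y; w]; rewrite !inE ?eqxx ?orbT.
    by exists t => //; rewrite !inE tM nt1 nt2.
  + have key : forall v t, t \in M' -> v \in t -> v \in [set x; y] \/ v \in [set z; w] ->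
        t = [set x; z] \/ t = [set y; w].
      move=> v t tM vt vin; move: tM.
      rewrite !inE => /orP [/andP [nt2 /andP [nt1 tM]]|/orP [] /eqP ->]; auto.
      case: vin => vin; exfalso.
        by move/eqP: nt1; apply; exact: pm_uniq pM tM xyM vt vin.
      by move/eqP: nt2; apply; exact: pm_uniq pM tM zwM vt vin.
    move=> v t1 t2 t1M t2M vt1 vt2.
    case: (boolP ((v \in [set x; y]) || (v \in [set z; w]))) => [hv|].
      have hv' : v \in [set x; y] \/ v \in [set z; w] by case/orP: hv; auto.
      have k1 := key v t1 t1M vt1 hv'; have k2 := key v t2 t2M vt2 hv'.
      move: vt1 vt2 hv.
      case: k1 => ->; case: k2 => -> //;
      rewrite !inE => /orP [] /eqP E1 /orP [] /eqP E2 _; subst; clash.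
    rewrite !inE => /norP [/norP [nvx nvy] /norP [nvz nvw]].
    have old : forall t, t \in M' -> v \in t -> t \in M.
      move=> t; rewrite !inE => /orP [/andP [_ /andP [_ ->]]|/orP [] /eqP ->] //;
      by rewrite !inE => /orP [] /eqP E; rewrite E eqxx in nvx nvy nvz nvw.
    exact: pm_uniq pM (old _ t1M vt1) (old _ t2M vt2) vt1 vt2.
- apply/eqP => EM.
  have : [set x; z] \in M by rewrite -EM !inE eqxx orbT.
  move=> xzM; have := pm_uniq pM xzM xyM (set21 _ _) (set21 _ _).
  by move/setP/(_ z); rewrite !inE eqxx orbT (negbTE nzx) (negbTE nzy).
- by move=> t tM n1 n2; rewrite !inE tM n1 n2.
Qed.

Lemma forcing_minus1 M x : perfect_matching e M -> x \in M -> forcing e M (M :\ x).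
Proof.
move=> pM xM; apply/andP; split; first exact: subsetDl.
apply/forallP => M'; apply/implyP => /andP [pM' sub]; apply/eqP.
apply: (pm_sub_eq pM pM'); apply/subsetP => t tM.
case: (eqVneq t x) => [->|ntx]; last by apply: (subsetP sub); rewrite !inE ntx.
have [u [v [_ uv xe]]] := edgeP (pm_edge pM xM).
have [t' t'M' ut'] := pm_cover u pM'.
suff -> : x = t' by [].
have [a [b [_ ab t'e]]] := edgeP (pm_edge pM' t'M').
have ux : u \in x by rewrite xe set21.
have other : t' \subset x.
  apply/subsetP => c ct'; apply/negPn/negP => ncx.
  have [s sM cs] := pm_cover c pM.
  have nsx : s != x by apply/eqP => E; rewrite -E cs in ncx.
  have sM' : s \in M' by apply: (subsetP sub); rewrite !inE nsx.
  have est := pm_uniq pM' sM' t'M' cs ct'.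
  have us : u \in s by rewrite est.
  have := pm_uniq pM sM xM us ux.
  by move/eqP; rewrite (negbTE nsx).
apply/eqP; rewrite eq_sym eqEcard other.
by rewrite (edge_card (pm_edge pM' t'M')) (edge_card (pm_edge pM xM)).
Qed.


Lemma swap_contra M S x y z w : perfect_matching e M -> forcing e M S ->
  [set x; y] \in M :\: S -> [set z; w] \in M :\: S ->
  [set x; y] != [set z; w] -> e x z -> e y w -> False.
Proof.
move=> pM /andP [sSM /forallP fS]; rewrite !inE => /andP [xyS xyM] /andP [zwS zwM] ne exz eyw.
have [M' [pM' neM sub]] := swap_pm pM xyM zwM ne exz eyw.
have := fS M'; rewrite pM' /= (negbTE neM) implybF => /negP; apply.
apply/subsetP => t tS; apply: sub; first exact: (subsetP sSM).
  by apply/eqP => E; rewrite -E tS in xyS.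
by apply/eqP => E; rewrite -E tS in zwS.
Qed.

Lemma fGM_le M S : forcing e M S -> fGM e M <= #|S|.
Proof. by move=> h; rewrite /fGM; apply: (bigmin_le (P := forcing e M)). Qed.

Lemma fGM_ge M m : perfect_matching e M -> m <= #|M| ->
  (forall S, forcing e M S -> m <= #|S|) -> m <= fGM e M.
Proof.
move=> pM hM hS; rewrite /fGM; apply: (big_ind (fun x => m <= x)) => //.
by move=> a b ha hb; rewrite leq_min ha hb.
Qed.

Lemma forcing_sub M S : forcing e M S -> S \subset M.
Proof. by case/andP. Qed.

Lemma pm_sub_eq2 M M' : perfect_matching e M -> perfect_matching e M' ->
  (forall x, x \in M' -> exists2 t, t \in M & x \subset t) -> M' = M.
Proof.
move=> pM pM' H; apply/esym/(pm_sub_eq pM' pM); apply/subsetP => x xM'.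
have [t tM sxt] := H x xM'.
have -> : x = t; last by [].
apply/eqP; rewrite eqEcard sxt.
by rewrite (edge_card (pm_edge pM' xM')) (edge_card (pm_edge pM tM)).
Qed.

Lemma edge_other (esym : symmetric e) x v : is_edge e x -> v \in x ->
  exists y, [/\ e v y, v != y & x = [set v; y]].
Proof.
case/edgeP => a [b [eab nab ->]]; rewrite !inE => /orP [] /eqP ->.
  by exists b.
by exists a; rewrite esym eq_sym setUC.
Qed.

End Gen.


Section Hk.
Variables n k : nat.
Local Notation V := (bool * 'I_n)%type.
Local Notation E := (Hk_adj n k).

Lemma Hk_irr : irreflexive E.
Proof. by case=> b i; rewrite /Hk_adj eqxx /special_pair eqxx. Qed.

Lemma sp_sym (i j : nat) : special_pair k i j = special_pair k j i.
Proof. by rewrite /special_pair; apply/idP/idP; lia. Qed.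

Lemma Hk_sym : symmetric E.
Proof.
have sp : forall i j : 'I_n, special_pair k i j = special_pair k j i.
  by move=> i j; rewrite /special_pair; apply/idP/idP; lia.
case=> b i [c j]; rewrite /Hk_adj /= eq_sym sp; case: ifP => _ //.
by rewrite eq_sym.
Qed.

Lemma HkE b i c j : E (b, i) (c, j) =
  if b == c then special_pair k i j else (i == j) || ~~ special_pair k i j.
Proof. by []. Qed.

Lemma pm_cardn M : perfect_matching E M -> #|M| = n.
Proof.
move/(pm_card Hk_irr); rewrite card_prod card_bool card_ord; lia.
Qed.

Definition e0 (i : 'I_n) : {set V} := [set (false, i); (true, i)].
Definition M0 : {set {set V}} := [set e0 i | i : 'I_n].

Lemma M0_pm : perfect_matching E M0.
Proof.
apply: pm_intro.
- move=> x /imsetP [i _ ->]; apply: edgeI; by rewrite HkE /= eqxx.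
- case=> b i; exists (e0 i); first exact: imset_f.
  by case: b; rewrite !inE eqxx ?orbT.
- move=> [b i] x y /imsetP [j _ ->] /imsetP [l _ ->].
  rewrite !inE !xpair_eqE => /orP [] /andP [_ /eqP <-] /orP [] /andP [_ /eqP <-] //.
Qed.

Lemma M0_f : n - 1 <= fGM E M0.
Proof.
apply: fGM_ge M0_pm _ _; first by rewrite (pm_cardn M0_pm) leq_subr.
move=> S fS; rewrite leqNgt; apply/negP => small.
have sS := forcing_sub fS.
have : 1 < #|M0 :\: S|.
  have := cardsID S M0; rewrite (setIidPr sS) (pm_cardn M0_pm); set a := #|M0 :\: S|; set b := #|S|; lia.
case/card_gt1P => x [y [xD yD nxy]].
have [i _ xe] : exists2 i, i \in 'I_n & x = e0 i.
  by move: xD; rewrite inE => /andP [_ /imsetP [i ? ->]]; exists i.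
have [j _ ye] : exists2 j, j \in 'I_n & y = e0 j.
  by move: yD; rewrite inE => /andP [_ /imsetP [j ? ->]]; exists j.
subst x y.
have nij : i != j by apply: contraNneq nxy => ->.
case sp : (special_pair k i j).
- apply: (swap_contra Hk_irr M0_pm fS xD yD nxy); rewrite HkE /= sp //.
- have yD' : [set (true, j); (false, j)] \in M0 :\: S by rewrite setUC.
  apply: (swap_contra Hk_irr M0_pm fS xD yD' _); rewrite ?HkE /= ?sp ?orbT //.
  apply/negP => /eqP Ee; move/eqP: nxy; apply; by rewrite /e0 Ee setUC.
Qed.

Lemma F_le M : 1 <= n -> perfect_matching E M -> fGM E M <= n - 1.
Proof.
move=> n1 pM.
have [x xM _] := pm_cover (false, Ordinal n1) pM.
apply: leq_trans (fGM_le (forcing_minus1 Hk_irr pM xM)) _.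
have := cardsD1 x M; rewrite xM (pm_cardn pM); set a := #|M :\ x|; lia.
Qed.

Lemma Fmax_eq : 1 <= n -> F_max E = n - 1.
Proof.
move=> n1; apply/eqP; rewrite eqn_leq; apply/andP; split.
  by apply/bigmax_leqP => M pM; exact: F_le.
by apply: leq_trans M0_f _; apply: (leq_bigmax_cond M0 M0_pm).
Qed.

End Hk.


Ltac crush := rewrite ?/special_pair /=;
  repeat match goal with |- context [if ?c then _ else _] => case: ifP => ? end;
  rewrite ?eqxx //=; try lia.

Section B.
Variables n k : nat.
Hypothesis hk : 2 * k < n.
Local Notation V := (bool * 'I_n)%type.
Local Notation E := (Hk_adj n k).
Local Notation irr := (@Hk_irr n k).
Local Notation sym := (@Hk_sym n k).

Definition mS (p q : V) : bool :=
  if p.2 < 2 * k then (p.1 == q.1) && (p.2./2 == q.2./2) else (p.2 == q.2 :> nat).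

Lemma mS_refl p : mS p p.
Proof. by rewrite /mS !eqxx; case: ifP. Qed.

Lemma mS_sym p q : mS p q = mS q p.
Proof. case: p q => [b i] [c j]; rewrite /mS /=; case: b; case: c; crush. Qed.

Lemma mS_trans p q r : mS p q -> mS q r -> mS p r.
Proof.
case: p q r => [b i] [c j] [d l]; rewrite /mS /=; case: b; case: c; case: d; crush.
Qed.

Definition cls (p : V) : {set V} := [set w | mS p w].

Lemma cls_edge p : exists q, E p q /\ cls p = [set p; q].
Proof.
case: p => b i; case: (ltnP i (2 * k)) => hi.
- have hj : (if odd i then i.-1 else i.+1) < n by case: ifP; lia.
  exists (b, Ordinal hj); split.
    rewrite HkE eqxx /special_pair /=; case: ifP => ?; lia.
  apply/setP => [[c j]]; rewrite !inE /mS /= hi !xpair_eqE -!val_eqE /=.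
  case: b; case: c => //=; case: ifP => ?; apply/idP/idP; lia.
- exists (~~ b, i); split; first by rewrite HkE; case: b => /=; rewrite eqxx.
  apply/setP => [[c j]]; rewrite !inE /mS /= ltnNge hi /= !xpair_eqE -!val_eqE /=.
  by case: b; case: c => //=; rewrite ?andbF ?orbF.
Qed.

Definition Mstar : {set {set V}} := [set x | [exists p, x == cls p]].

Lemma cls_mem p q : (q \in cls p) = mS p q.
Proof. by rewrite inE. Qed.

Lemma cls_eq p q : mS p q -> cls p = cls q.
Proof.
move=> h; apply/setP => w; rewrite !inE; apply/idP/idP => h2.
  by apply: mS_trans h2; rewrite mS_sym.
exact: mS_trans h h2.
Qed.

Lemma Mstar_mem x v : x \in Mstar -> v \in x -> x = cls v.
Proof. by rewrite inE => /existsP [p /eqP ->]; rewrite cls_mem => /cls_eq. Qed.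

Lemma cls_in p : cls p \in Mstar.
Proof. by rewrite inE; apply/existsP; exists p. Qed.

Lemma Mstar_pm : perfect_matching E Mstar.
Proof.
apply: pm_intro.
- move=> x; rewrite inE => /existsP [p /eqP ->].
  by have [q [Epq ->]] := cls_edge p; exact: edgeI.
- by move=> v; exists (cls v); [exact: cls_in | rewrite cls_mem mS_refl].
- by move=> v x y xM yM vx vy; rewrite (Mstar_mem xM vx) (Mstar_mem yM vy).
Qed.

Definition Sstar : {set {set V}} :=
  [set x in Mstar | [forall i : 'I_n, (i <= 2 * k) ==> ((false, i) \notin x)]].

Lemma Sstar_sub : Sstar \subset Mstar.
Proof. by apply/subsetP => x; rewrite inE => /andP []. Qed.

Lemma Sstar_card : #|Sstar| <= n - k - 1.
Proof.
pose f (s : 'I_k.+1) : {set V} :=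
  [set w : V | if s < k then (w.1 == false) && (w.2./2 == s) else (w.2 == 2 * k :> nat)].
have hs : forall s : 'I_k.+1, 2 * s < n by move=> [s hs] /=; lia.
have fE : forall s : 'I_k.+1, f s = cls (false, Ordinal (hs s)).
  move=> s; have := ltn_ord s; move=> hs'; apply/setP => [[c j]]; rewrite !inE /mS /=.
  case: c => /=; case: ifP => ?; case: ifP => ?; apply/idP/idP; lia.
have fin : forall s, (false, Ordinal (hs s)) \in f s by move=> s; rewrite fE cls_mem mS_refl.
have finj : injective f.
  move=> s t Est; have := fin s; rewrite Est inE /=.
  move=> h; apply/val_inj; have := ltn_ord s; have := ltn_ord t; move: h; case: ifP => ? /=; lia.
have sub : f @: setT \subset Mstar :\: Sstar.
  apply/subsetP => x /imsetP [s _ ->]; rewrite inE; apply/andP; split; last by rewrite fE cls_in.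
  rewrite inE negb_and; apply/orP; right; apply/negP => /forallP /(_ (Ordinal (hs s))).
  rewrite fin implybF /=; have := ltn_ord s; lia.
have := subset_leq_card sub; rewrite card_imset // cardsT card_ord.
have := cardsID Sstar Mstar; rewrite (setIidPr Sstar_sub) (pm_cardn Mstar_pm).
set a := #|Sstar|; set b := #|Mstar :\: Sstar|; lia.
Qed.

Definition cov (y : V) := [exists z in Sstar, y \in z].

Lemma covP y : reflect (exists2 z, z \in Sstar & y \in z) (cov y).
Proof. exact: exists_inP. Qed.

Lemma uncov_u (i : 'I_n) : i <= 2 * k -> ~ cov (false, i).
Proof.
move=> hi /covP [z]; rewrite inE => /andP [_ /forallP /(_ i)]; rewrite hi /= => /negP; exact.
Qed.

Lemma uncov y : ~ cov y -> ((y.1 == false) && (y.2 <= 2 * k)) || (y.1 && (y.2 == 2 * k :> nat)).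
Proof.
move=> nc; apply/negPn/negP => h; apply: nc; apply/covP; exists (cls y); last by rewrite cls_mem mS_refl.
rewrite inE cls_in /=; apply/forallP => i; apply/implyP => hi; rewrite cls_mem.
move: h; case: y => [b j] /=; rewrite /mS /=; case: b => /=; case: ifP => ?; lia.
Qed.

Lemma Sstar_forcing : forcing E Mstar Sstar.
Proof.
apply/andP; split; first exact: Sstar_sub.
apply/forallP => M'; apply/implyP => /andP [pM' sub]; apply/eqP.
have covM : forall x p, x \in M' -> p \in x -> cov p -> x \in Mstar.
  move=> x p xM px /covP [z zS pz].
  by rewrite (pm_uniq pM' xM (subsetP sub _ zS) px pz); apply: (subsetP Sstar_sub).
have cov2 : forall x p q, x \in M' -> p \in x -> q \in x -> cov q -> cov p.
  move=> x p q xM px qx /covP [z zS qz]; apply/covP; exists z => //.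
  by rewrite -(pm_uniq pM' xM (subsetP sub _ zS) qx qz).
pose om := Ordinal hk.
pose vm : V := (true, om); pose um : V := (false, om).
have ncvm : ~ cov vm.
  move=> /covP [z]; rewrite inE => /andP [zM /forallP /(_ om)]; rewrite leqnn /= => /negP nz vz.
  by apply: nz; rewrite (Mstar_mem zM vz) cls_mem /mS /= ltnn.
have [xm xmM vxm] := pm_cover vm pM'.
have [y [Evy nvy xme]] := edge_other irr sym (pm_edge pM' xmM) vxm.
have yxm : y \in xm by rewrite xme set22.
have ncy : ~ cov y by move=> cy; apply: ncvm; exact: cov2 xmM vxm yxm cy.
have yE : y = um.
  move: (uncov ncy) nvy Evy yxm xme; case: y {ncy} => [[] j] /=.
    by move=> /eqP hj; rewrite /vm xpair_eqE /= -val_eqE /= hj eqxx.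
  move=> hj _ Evj yxm xme; rewrite orbF in hj; apply/eqP; rewrite xpair_eqE /= -val_eqE /=.
  rewrite eqn_leq hj /= leqNgt; apply/negP => jlt.
  have hj' : (if odd j then j.-1 else j.+1) < n by case: ifP; lia.
  pose y' : V := (false, Ordinal hj').
  have ncy' : ~ cov y' by apply: uncov_u => /=; move: jlt; clear -hk; case: ifP; lia.
  have [x2 x2M y'x2] := pm_cover y' pM'.
  have [z [Eyz nyz x2e]] := edge_other irr sym (pm_edge pM' x2M) y'x2.
  have zx2 : z \in x2 by rewrite x2e set22.
  have ncz : ~ cov z by move=> cz; apply: ncy'; exact: cov2 x2M y'x2 zx2 cz.
  have y'xm : y' \notin xm.
    rewrite xme !inE !xpair_eqE /= -val_eqE /=; move: jlt; clear -hk; case: ifP; lia.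
  apply: (negP y'xm); suff -> : xm = x2 by [].
  case/orP: (uncov ncz) => hz.
    have zE : z = (false, j).
      move: hz Eyz; case: z {zx2 ncz x2e nyz} => [[] l] //= hl.
      rewrite /y' /Hk_adj /= /special_pair /= => hsp.
      by apply/eqP; rewrite xpair_eqE /= -val_eqE /=; move: hsp jlt; clear -hk; case: ifP => ?; lia.
    apply: (pm_uniq pM' xmM x2M _ zx2); by rewrite zE xme set22.
  have zE : z = vm.
    by move: hz; case: z {zx2 ncz x2e nyz Eyz} => [[] l] //= /eqP hl;
      apply/eqP; rewrite xpair_eqE /= -val_eqE /= hl eqxx.
  by apply: (pm_uniq pM' xmM x2M vxm); rewrite -zE.
subst y.
apply: (pm_sub_eq2 irr Mstar_pm pM') => x xM'.
have [p [Epq npq xe]] : exists p, [/\ E p.1 p.2, p.1 != p.2 & x = [set p.1; p.2]].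
  by have [a [b [? ? ?]]] := edgeP irr (pm_edge pM' xM'); exists (a, b).
case: p Epq npq xe => p q /= Epq npq xe.
have px : p \in x by rewrite xe set21.
have qx : q \in x by rewrite xe set22.
exists (cls p); first exact: cls_in.
suff mpq : mS p q by rewrite xe; apply/subsetP => w; rewrite cls_mem !inE => /orP [] /eqP ->;
  rewrite ?mS_refl.
case: (boolP (cov p)) => [cp|/negP ncp].
  by move: qx; rewrite (Mstar_mem (covM _ _ xM' px cp) px) cls_mem.
case: (boolP (p \in xm)) => pxm.
  have xx : x = xm := pm_uniq pM' xM' xmM px pxm.
  have qxm : q \in xm by rewrite -xx.
  move: pxm qxm; rewrite xme !inE => /orP [] /eqP -> /orP [] /eqP ->; by rewrite /mS /= ltnn.
case: (boolP (q \in xm)) => qxm.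
  have xx : x = xm := pm_uniq pM' xM' xmM qx qxm.
  have pxm' : p \in xm by rewrite -xx.
  by rewrite pxm' in pxm.
have ncq : ~ cov q by move=> cq; apply: ncp; exact: cov2 xM' px qx cq.
move: (uncov ncp) (uncov ncq) pxm qxm Epq; rewrite xme !inE.
case: p q {x xM' xe px qx npq ncp ncq} => [b i] [c j] /=.
rewrite !xpair_eqE /= -!val_eqE /= /mS /Hk_adj /special_pair /=; clear -hk.
case: b; case: c => /=; case: ifP => ?; lia.
Qed.
End B.


Lemma arith4 k (a1 a2 a3 a4 c1 c2 c3 c4 : nat) :
  a2 != a3 -> a2 != a4 -> a3 != a4 -> c2 != c3 -> c2 != c4 -> c3 != c4 ->
  special_pair k a1 c2 || special_pair k a2 c1 ->
  special_pair k a1 c3 || special_pair k a3 c1 ->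
  special_pair k a1 c4 || special_pair k a4 c1 -> False.
Proof. rewrite /special_pair => ? ? ? ? ? ?. do 3 (case/orP => /and3P [? /eqP ? ?]); lia. Qed.

Lemma arith3 k (a1 a2 a3 c1 c2 c3 : nat) :
  a1 != a2 -> a1 != a3 -> a2 != a3 -> c1 != c2 -> c1 != c3 -> c2 != c3 ->
  special_pair k a1 c2 || special_pair k a2 c1 ->
  special_pair k a1 c3 || special_pair k a3 c1 ->
  special_pair k a2 c3 || special_pair k a3 c2 ->
  [&& a1./2 < k, a2./2 < k, a3./2 < k & (a1./2 != a2./2) || (a1./2 != a3./2)].
Proof. rewrite /special_pair => ? ? ? ? ? ?. do 3 (case/orP => /and3P [? /eqP ? ?]); lia. Qed.

Lemma arith2 k (a1 a2 c1 c2 : nat) :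
  special_pair k a1 c2 || special_pair k a2 c1 -> (a1./2 < k) || (a2./2 < k).
Proof. rewrite /special_pair; lia. Qed.

Lemma nbb (b : bool) : (~~ b == b) = false. Proof. by case: b. Qed.
Lemma bnb (b : bool) : (b == ~~ b) = false. Proof. by case: b. Qed.

Lemma arith_uv k (i j i' j' : nat) : special_pair k i j -> special_pair k i' j' ->
  ((i == i') || ~~ special_pair k i i') && ((j == j') || ~~ special_pair k j j') ||
  ((i == j') || ~~ special_pair k i j') && ((j == i') || ~~ special_pair k j i').
Proof. rewrite /special_pair => /and3P [? /eqP ? ?] /and3P [? /eqP ? ?]; lia. Qed.

Section C.
Variables n k : nat.
Local Notation V := (bool * 'I_n)%type.
Local Notation E := (Hk_adj n k).
Local Notation irr := (@Hk_irr n k).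
Local Notation sym := (@Hk_sym n k).

Definition sd (c : bool) (x : {set V}) := [forall p in x, p.1 == c].

Lemma edge_shape b x : is_edge E x ->
  (exists c (i j : 'I_n), [/\ special_pair k i j, x = [set (c, i); (c, j)] &
      forall c', sd c' x = (c' == c)])
  \/ (exists a c : 'I_n, [/\ ~~ special_pair k a c, x = [set (~~ b, a); (b, c)] &
      forall c', sd c' x = false]).
Proof.
case/(edgeP irr) => [[p i]] [[q j]] [Epq npq ->].
have sdE : forall c' (u w : V), sd c' [set u; w] = (u.1 == c') && (w.1 == c').
  move=> c' u w; apply/forallP/andP => [H|[h1 h2] r].
    by split; [move/implyP: (H u) | move/implyP: (H w)]; apply; rewrite !inE eqxx ?orbT.
  by apply/implyP; rewrite !inE => /orP [] /eqP ->.
case: (eqVneq p q) => [epq|npq'].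
  subst q; left; exists p, i, j; split => //.
    by move: Epq; rewrite HkE eqxx.
  by move=> c'; rewrite sdE /= andbb eq_sym.
right; move: Epq; rewrite HkE (negbTE npq') => Eij.
have nsp : ~~ special_pair k i j.
  by move: Eij; case: eqP => [->|] //=; rewrite /special_pair eqxx.
have sdf : forall c', sd c' [set (p, i); (q, j)] = false.
  by move=> c'; rewrite sdE /=; case: p q npq' {npq} => [] [] //= _; case: c'.
case: (eqVneq p (~~ b)) => [hp|hp].
  have hq : q = b by move: npq'; rewrite hp; case: (q); case: (b).
  by exists i, j; split => //; rewrite hp hq.
have hp' : p = b by move: hp; case: (p); case: (b).
have hq : q = ~~ b by move: npq'; rewrite hp'; case: (q); case: (b).
exists j, i; split => //.
  by move: nsp; rewrite /special_pair; apply: contra => /and3P [? ? ?]; apply/and3P; split; lia.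
by rewrite setUC hp' hq.
Qed.

Lemma side_bound b M S : perfect_matching E M -> forcing E M S ->
  (forall x, x \in M :\: S -> ~~ sd b x) -> #|M :\: S| <= k.+1.
Proof.
move=> pM fS nob.
set D := M :\: S.
have DM : forall x, x \in D -> x \in M by move=> x; rewrite inE => /andP [].
have vx : forall v x y, x \in D -> y \in D -> v \in x -> v \in y -> x = y.
  by move=> v x y xD yD; apply: (pm_uniq pM (DM _ xD) (DM _ yD)).
set Duu := [set x in D | sd (~~ b) x].
set Duv := D :\: Duu.
have Dcard : #|D| = #|Duu| + #|Duv|.
  have := cardsID Duu D; rewrite (setIidPr _) //.
  by apply/subsetP => x; rewrite inE => /andP [].
have uvD : forall x, x \in Duv -> x \in D by move=> x /setDP [].
have uvP : forall x, x \in Duv -> exists a c : 'I_n,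
    ~~ special_pair k a c /\ x = [set (~~ b, a); (b, c)].
  move=> x /setDP [xD xnuu].
  have nsd : ~~ sd (~~ b) x by apply: contra xnuu => h; rewrite inE xD h.
  case: (edge_shape b (pm_edge pM (DM x xD))) => [[c [i [j [sp xe hsd]]]]|[a [c [nsp xe _]]]].
    by move: (nob x xD) nsd; rewrite !hsd; case: (b); case: (c).
  by exists a, c.
have uuP : forall x, x \in Duu -> exists i j : 'I_n,
    special_pair k i j /\ x = [set (~~ b, i); (~~ b, j)].
  move=> x; rewrite inE => /andP [xD sdx].
  case: (edge_shape b (pm_edge pM (DM x xD))) => [[c [i [j [sp xe hsd]]]]|[a [c [nsp xe hsd]]]].
    by move: sdx; rewrite hsd => /eqP ec; subst c; exists i, j.
  by move: sdx; rewrite hsd.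
set Bs := [set s : 'I_k | [exists x in Duv, [exists a : 'I_n, ((~~ b, a) \in x) && (a./2 == s)]]].
have BsI : forall x (a c : 'I_n), x \in Duv -> x = [set (~~ b, a); (b, c)] ->
    forall h : a./2 < k, Ordinal h \in Bs.
  move=> x a c xuv xe h; rewrite inE; apply/exists_inP; exists x => //.
  by apply/existsP; exists a; rewrite xe !inE eqxx /= eqxx.
have claim1 : #|Duu| + #|Bs| <= k.
  pose g (s : 'I_k) : {set V} := [set p : V | (p.1 == ~~ b) && (p.2./2 == s)].
  have sub : Duu \subset g @: ~: Bs.
    apply/subsetP => x xuu; have [i [j [sp xe]]] := uuP x xuu.
    have hi : i./2 < k by move: sp; rewrite /special_pair => /and3P [].
    have xg : x = g (Ordinal hi).
      rewrite xe; apply/setP => [[c l]]; rewrite !inE !xpair_eqE -!val_eqE /=.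
      move: sp; rewrite /special_pair; clear; case: (c == ~~ b) => //= sp.
      by apply/idP/idP; lia.
    apply/imsetP; exists (Ordinal hi) => //.
    rewrite !inE; apply/negP => /exists_inP [y yuv /existsP [a /andP [ay /eqP ha]]].
    have ax : (~~ b, a) \in x by rewrite xg inE eqxx /= ha.
    have xD : x \in D by move: xuu; rewrite inE => /andP [].
    have exy := vx _ _ _ xD (uvD _ yuv) ax ay.
    by move: yuv; rewrite -exy inE xuu.
  have := subset_leq_card sub; have := leq_imset_card g (~: Bs).
  have := cardsC Bs; rewrite card_ord.
  set u := #|Duu|; set v := #|Bs|; set w := #|_ @: _|; set t := #|~: Bs|; lia.
have pairinfo : forall x y (a1 c1 a2 c2 : 'I_n), x \in Duv -> y \in Duv -> x != y ->
    x = [set (~~ b, a1); (b, c1)] -> y = [set (~~ b, a2); (b, c2)] ->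
    [&& (a1 != a2 :> nat), (c1 != c2 :> nat) &
        special_pair k a1 c2 || special_pair k a2 c1].
  move=> x y a1 c1 a2 c2 xuv yuv nxy xe ye.
  have xD := uvD _ xuv; have yD := uvD _ yuv.
  apply/and3P; split.
  - apply/negP => /eqP /val_inj ea; apply: (negP nxy); apply/eqP.
    by apply: (vx (~~ b, a1) x y xD yD); [rewrite xe | rewrite ye ea]; rewrite !inE eqxx.
  - apply/negP => /eqP /val_inj ec; apply: (negP nxy); apply/eqP.
    by apply: (vx (b, c1) x y xD yD); [rewrite xe | rewrite ye ec]; rewrite !inE eqxx ?orbT.
  apply/negPn/negP; rewrite negb_or => /andP [n1 n2].
  apply: (swap_contra irr pM fS (x := (~~ b, a1)) (y := (b, c1)) (z := (b, c2)) (w := (~~ b, a2))).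
  - by rewrite -xe.
  - by rewrite setUC -ye.
  - by rewrite -xe [X in _ != X]setUC -ye.
  - by rewrite HkE nbb n1 orbT.
  - by rewrite HkE bnb sp_sym n2 orbT.
have claim2 : #|Duv| <= #|Bs|.+1.
  case: (leqP #|Duv| 1) => h1; first by apply: leq_trans h1 _.
  have [x1 [x2 [x1D x2D n12]]] := card_ge2 h1.
  have [a1 [c1 [_ e1]]] := uvP _ x1D; have [a2 [c2 [_ e2]]] := uvP _ x2D.
  have /and3P [_ _ p12] := pairinfo _ _ _ _ _ _ x1D x2D n12 e1 e2.
  have Bs1 : 0 < #|Bs|.
    apply/card_gt0P; case/orP: (arith2 p12) => h.
      by exists (Ordinal h); exact: BsI e1 h.
    by exists (Ordinal h); exact: BsI e2 h.
  case: (leqP #|Duv| 2) => h2; first by apply: leq_trans h2 _.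
  have [y1 [y2 [y3 [y1D y2D y3D [m12 m13 m23]]]]] := card_ge3 h2.
  have [b1 [d1 [_ f1]]] := uvP _ y1D; have [b2 [d2 [_ f2]]] := uvP _ y2D.
  have [b3 [d3 [_ f3]]] := uvP _ y3D.
  have /and3P [q1 r1 s12] := pairinfo _ _ _ _ _ _ y1D y2D m12 f1 f2.
  have /and3P [q2 r2 s13] := pairinfo _ _ _ _ _ _ y1D y3D m13 f1 f3.
  have /and3P [q3 r3 s23] := pairinfo _ _ _ _ _ _ y2D y3D m23 f2 f3.
  have /and4P [h1' h2' h3' hd] := arith3 q1 q2 q3 r1 r2 r3 s12 s13 s23.
  have Bs2 : 1 < #|Bs|.
    apply/card_gt1P; case/orP: hd => hd.
      exists (Ordinal h1'), (Ordinal h2'); split; [exact: BsI f1 _|exact: BsI f2 _|].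
      by apply: contra hd => /eqP /(congr1 val) /= ->.
    exists (Ordinal h1'), (Ordinal h3'); split; [exact: BsI f1 _|exact: BsI f3 _|].
    by apply: contra hd => /eqP /(congr1 val) /= ->.
  case: (leqP #|Duv| 3) => h3; first by apply: leq_trans h3 _.
  have [z1 [z2 [z3 [z4 [[z1D z2D z3D z4D] [[t12 t13 t14] [t23 t24 t34]]]]]]] := card_ge4 h3.
  have [e1' [g1 [_ k1]]] := uvP _ z1D; have [e2' [g2 [_ k2]]] := uvP _ z2D.
  have [e3' [g3 [_ k3]]] := uvP _ z3D; have [e4' [g4 [_ k4]]] := uvP _ z4D.
  have /and3P [_ _ w12] := pairinfo _ _ _ _ _ _ z1D z2D t12 k1 k2.
  have /and3P [_ _ w13] := pairinfo _ _ _ _ _ _ z1D z3D t13 k1 k3.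
  have /and3P [_ _ w14] := pairinfo _ _ _ _ _ _ z1D z4D t14 k1 k4.
  have /and3P [u23 v23 _] := pairinfo _ _ _ _ _ _ z2D z3D t23 k2 k3.
  have /and3P [u24 v24 _] := pairinfo _ _ _ _ _ _ z2D z4D t24 k2 k4.
  have /and3P [u34 v34 _] := pairinfo _ _ _ _ _ _ z3D z4D t34 k3 k4.
  by case: (arith4 u23 u24 u34 v23 v24 v34 w12 w13 w14).
rewrite Dcard; set u := #|Duu|; set v := #|Duv|; set w := #|Bs|; move: claim1 claim2.
rewrite -/u -/v -/w; lia.
Qed.


Lemma same_shape c M x : perfect_matching E M -> x \in M -> sd c x ->
  exists i j : 'I_n, [/\ special_pair k i j, x = [set (c, i); (c, j)] &
      forall c', sd c' x = (c' == c)].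
Proof.
move=> pM xM sdx.
case: (edge_shape c (pm_edge pM xM)) => [[c0 [i [j [sp xe hsd]]]]|[a [c1 [nsp xe hsd]]]].
  by move: sdx; rewrite hsd => /eqP ec; subst c0; exists i, j.
by move: sdx; rewrite hsd.
Qed.

Lemma lower M S : perfect_matching E M -> forcing E M S -> n - k - 1 <= #|S|.
Proof.
move=> pM fS.
have sSM := forcing_sub fS.
have cardD : #|S| + #|M :\: S| = n.
  by have := cardsID S M; rewrite (setIidPr sSM) (pm_cardn pM).
have DM : forall x, x \in M :\: S -> x \in M by move=> x; rewrite inE => /andP [].
suff : #|M :\: S| <= k.+1 by move: cardD; set a := #|S|; set b := #|M :\: S|; lia.
case: (boolP [exists x in M :\: S, sd false x]) => [/exists_inP [x xD sdx]|nf]; last first.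
  apply: (side_bound (b := false) pM fS) => x xD; apply/negP => h; move/negP: nf; apply.
  by apply/exists_inP; exists x.
case: (boolP [exists y in M :\: S, sd true y]) => [/exists_inP [y yD sdy]|nt]; last first.
  apply: (side_bound (b := true) pM fS) => y yD; apply/negP => h; move/negP: nt; apply.
  by apply/exists_inP; exists y.
exfalso.
have [i [j [sp xe hx]]] := same_shape pM (DM _ xD) sdx.
have [i' [j' [sp' ye hy]]] := same_shape pM (DM _ yD) sdy.
have nxy : x != y by apply/eqP => exy; move: sdy; rewrite -exy hx.
case/orP: (arith_uv sp sp') => /andP [h1 h2].
  apply: (swap_contra irr pM fS (x := (false, i)) (y := (false, j)) (z := (true, i')) (w := (true, j'))).
  - by rewrite -xe.
  - by rewrite -ye.
  - by rewrite -xe -ye.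
  - by rewrite HkE /= h1.
  - by rewrite HkE /= h2.
apply: (swap_contra irr pM fS (x := (false, i)) (y := (false, j)) (z := (true, j')) (w := (true, i'))).
- by rewrite -xe.
- by rewrite setUC -ye.
- by rewrite -xe [X in _ != X]setUC -ye.
- by rewrite HkE /= h1.
- by rewrite HkE /= h2.
Qed.

End C.

Theorem lemma5p6 (n k : nat) :
  1 <= n -> k <= (n - 1)./2 ->
  f_min (Hk_adj n k) = n - k - 1 /\
  (k = (n - 1)./2 ->
     f_min (Hk_adj n k) = n./2 /\ F_max (Hk_adj n k) = n - 1).
Proof.
move=> n1 hk.
have hk' : 2 * k < n by lia.
have fm : f_min (Hk_adj n k) = n - k - 1.
  apply/eqP; rewrite eqn_leq; apply/andP; split.
    apply: leq_trans (bigmin_le _ _ (Mstar_pm hk')) _.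
    apply: leq_trans (fGM_le (Sstar_forcing hk')) _.
    exact: Sstar_card.
  rewrite /f_min; apply: (big_ind (fun x => n - k - 1 <= x)).
  - by rewrite card_prod card_bool card_ord; lia.
  - by move=> a b ha hb; rewrite leq_min ha hb.
  move=> M pM; apply: (fGM_ge pM); first by rewrite (pm_cardn pM); lia.
  by move=> S fS; exact: lower pM fS.
split => // ek; split; first by rewrite fm; lia.
exact: Fmax_eq.
Qed.
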